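(* Let $p$ be an odd prime. Then $$\Psi^w_{\mathbb{Z}_p}(x)=\frac{2}{p-1}\sum_{d\mid\frac{p-1}{2}}\phi\!\left(\frac{p-1}{2d}\right)\left(\left(1+x^{\frac{p-1}{d}}\right)^{d}-1\right),$$ and hence $$\mathcal{E}^w(\mathbb{Z}_p)=\Psi^w_{\mathbb{Z}_p}(1)=\frac{2}{p-1}\sum_{d\mid\frac{p-1}{2}}\phi\!\left(\frac{p-1}{2d}\right)\left(2^d-1\right).$$
   Context: $\phi$ is Euler's totient function. For a finite group $\mathcal{A}$ with identity $e$, let $G(\mathcal{A})=\{\Omega\subseteq\mathcal{A}:\Omega^{-1}=\Omega,\ \langle\Omega\rangle=\mathcal{A},\ e\notin\Omega\}$. $\mathrm{Aut}(\mathcal{A})$ acts on $G(\mathcal{A})$ by $\alpha\cdot\Omega=\alpha(\Omega)$. For $k\ge1$ let $a^w_k(\mathcal{A})$ be the number of orbits of $\mathrm{Aut}(\mathcal{A})$ on $\{\Omega\in G(\mathcal{A}):|\Omega|=k\}$ (the number of weak equivalence classes of Cayley graphs $C(\mathcal{A},\Omega)$ of degree $k$); $\Psi^w_{\mathcal{A}}(x)=\sum_{k=1}^{|\mathcal{A}|-1}a^w_k(\mathcal{A})x^k$ and $\mathcal{E}^w(\mathcal{A})=\Psi^w_{\mathcal{A}}(1)$. *)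

(* Defs.v *)
From HB Require Import structures.
From mathcomp Require Import all_boot all_order all_algebra all_fingroup.
Set Implicit Arguments. Unset Strict Implicit. Unset Printing Implicit Defensive.
Import GRing.Theory.

Section CayleyDefs.
Variable gT : finGroupType.

Definition cayley_sets (A : {group gT}) (k : nat) : {set {set gT}} :=
  [set S : {set gT} | [&& S \subset A, (1 \notin S)%g, (S^-1 == S)%g,
                         (<<S>> == A)%g & #|S| == k]].

Definition aut_orbit (A : {group gT}) (S : {set gT}) : {set {set gT}} :=
  [set (fun x => a x) @: S | a : {perm gT} in Aut A].

Definition a_w (A : {group gT}) (k : nat) : nat :=
  #|[set aut_orbit A S | S in cayley_sets A k]|.

Definition Psi_w (A : {group gT}) : {poly rat} :=
  (\sum_(1 <= k < #|A|) (a_w A k)%:R *: 'X^k)%R.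

Definition E_w (A : {group gT}) : nat := \sum_(1 <= k < #|A|) a_w A k.
End CayleyDefs.

(* Main.v *)
Require Import Defs.
From HB Require Import structures.
From mathcomp Require Import all_boot all_order all_algebra all_fingroup.
From mathcomp Require Import all_solvable zify ring.
Set Implicit Arguments. Unset Strict Implicit. Unset Printing Implicit Defensive.
Lemma count_gcd m d : 0 < m -> d %| m ->
  \sum_(0 <= i < m) (gcdn i m == d) = totient (m %/ d).
Proof.
move=> m0 dm; have d0 : 0 < d by apply: dvdn_gt0 m0 dm.
set q := m %/ d; have em : m = q * d by rewrite divnK.
rewrite {1 2}em big_nat_mul totient_count_coprime.
apply: eq_bigr => j _.
rewrite big_ltn; last by rewrite ltn_pmul2r.
rewrite -muln_gcdl -[X in _ == X](mul1n d) eqn_pmul2r // coprime_sym /coprime.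
rewrite big1_seq; first by rewrite /= addn0.
move=> i /andP[_]; rewrite mem_index_iota => /andP[h1 h2].
case: eqP => [hg|//].
have : d %| i by rewrite -hg dvdn_gcdl.
case/dvdnP => k ik; move: h1 h2; rewrite ik ltn_pmul2r // ltn_pmul2r //.
lia.
Qed.

Lemma sum_gcd m (f : nat -> nat) : 0 < m ->
  \sum_(0 <= i < m) f (gcdn i m) =
  \sum_(d <- divisors m) totient (m %/ d) * f d.
Proof.
move=> m0.
transitivity (\sum_(0 <= i < m) \sum_(d <- divisors m) (gcdn i m == d) * f d).
  apply: eq_bigr => i _.
  rewrite (bigD1_seq (gcdn i m)) ?divisors_uniq //=; last first.
    by rewrite -dvdn_divisors // dvdn_gcdr.
  rewrite eqxx mul1n big1 ?addn0 // => d; rewrite eq_sym => /negbTE->.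
  by rewrite mul0n.
rewrite exchange_big /=; apply: eq_big_seq => d dd.
rewrite -big_distrl /= count_gcd //.
by rewrite dvdn_divisors.
Qed.

Open Scope group_scope.


Lemma gcd_in (T : finGroupType) (N : {group T}) (h : T) i m : 0 < m ->
  (h ^+ m \in N) && (h ^+ i \in N) = (h ^+ gcdn i m \in N).
Proof.
move=> m0; apply/idP/idP.
  case/andP => Nm Ni; have [a _ dv] := Bezoutl i m0.
  case/dvdnP: dv => c ec.
  have -> : h ^+ gcdn i m = h ^+ (c * m) * (h ^+ (a * i))^-1.
    by rewrite -ec gcdnC expgD mulgK.
  have N1 : h ^+ (c * m) \in N by rewrite mulnC expgM groupX.
  have N2 : h ^+ (a * i) \in N by rewrite mulnC expgM groupX.
  by rewrite groupM ?groupV.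
move=> Nd.
have E n : gcdn i m %| n -> h ^+ n \in N.
  by move=> dn; rewrite -(divnK dn) mulnC expgM groupX.
by rewrite !E ?dvdn_gcdr ?dvdn_gcdl.
Qed.

Lemma sum_cycle (T : finGroupType) (x : T) n (F : T -> nat) : #[x] = n ->
  \sum_(a in <[x]>) F a = \sum_(i < n) F (x ^+ i).
Proof.
move=> on.
have n0 : 0 < n by rewrite -on order_gt0.
have -> : <[x]> = (fun i : 'I_n => x ^+ i) @: [set: 'I_n].
  apply/setP => y; apply/cycleP/imsetP => [[j ->]|[i _ ->]]; last by exists i.
  exists (Ordinal (ltn_pmod j n0)); first by rewrite inE.
  by rewrite /= -(expg_mod_order x j) on.
rewrite big_imset /=; first by apply: eq_bigl => i; rewrite inE.
move=> i j _ _ /eqP; rewrite eq_expg_mod_order on !modn_small // => /eqP.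
exact: val_inj.
Qed.

Section Grp.
Variable gT : finGroupType.
Variable G : {group gT}.
Hypothesis prG : prime #|G|.
Hypothesis oddG : odd #|G|.
Local Notation X := (G :\ 1%g).

Lemma gen_nt x : x \in G -> x != 1 -> <[x]> = G.
Proof.
move=> Gx nx; apply/eqP; rewrite eqEcard cycle_subG Gx /=.
have ne1 : #[x] != 1%N by rewrite order_eq1.
have /(prime_nt_dvdP prG ne1) e := order_dvdG Gx.
by rewrite [X in _ <= X]e.
Qed.

Lemma autX b x j : b \in Aut G -> x \in G -> b (x ^+ j) = b x ^+ j.
Proof. by move=> Ab Gx; rewrite -(autmE Ab) morphX. Qed.

Lemma aut1 b : b \in Aut G -> b 1 = 1.
Proof. by move=> Ab; rewrite -(autmE Ab) morph1. Qed.

Lemma aut_fix b x : b \in Aut G -> x \in X -> b x = x -> b = 1.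
Proof.
move=> Ab; rewrite !inE => /andP[nx Gx] bx.
apply: (eq_Aut Ab (group1 _)) => y; rewrite -(gen_nt Gx nx) => /cycleP[j ->].
by rewrite autX // bx perm1.
Qed.

Lemma invM_G : {in G &, {morph (@invg gT) : x y / x * y}}.
Proof.
move=> x y Gx Gy /=; have cG : abelian G := cyclic_abelian (prime_cyclic prG).
rewrite invMg; apply: (centsP cG); by rewrite groupV.
Qed.

Definition invm_G := Morphism invM_G.

Lemma inj_inv : 'injm invm_G.
Proof. by apply/injmP => x y _ _ /invg_inj. Qed.

Lemma im_inv : invm_G @* G = G.
Proof.
apply/(morphim_fixP inj_inv _ (subxx _)).
by apply/subsetP => _ /morphimP[x _ Gx ->]; rewrite /= groupV.
Qed.

Definition iota := aut inj_inv im_inv.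
Lemma Aut_iota : iota \in Aut G. Proof. exact: Aut_aut. Qed.
Lemma iotaE x : x \in G -> iota x = x^-1.
Proof. by move=> Gx; rewrite /iota autE. Qed.


Definition mm := #|G|.-1 %/ 2.

Lemma p_eq : #|G|.-1 = (2 * mm)%N.
Proof.
rewrite /mm divn2; move: oddG; rewrite -(prednK (prime_gt0 prG)) /= => /negbTE on.
by rewrite mul2n -[in LHS](odd_double_half #|G|.-1) on.
Qed.

Lemma p_ge3 : 2 < #|G|.
Proof.
have := prime_gt1 prG; rewrite leq_eqVlt => /orP[/eqP e|//].
by move: oddG; rewrite -e.
Qed.

Lemma mm_gt0 : 0 < mm.
Proof. have := p_eq; rewrite -subn1; have := p_ge3; lia. Qed.

Lemma oH : #|Aut G| = #|G|.-1.
Proof. by rewrite card_Aut_cyclic ?prime_cyclic // totient_prime. Qed.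

Lemma iota2 : iota ^+ 2 = 1.
Proof.
apply: (eq_Aut (groupX _ Aut_iota) (group1 _)) => x Gx.
by rewrite expgS expg1 permM !iotaE ?groupV // invgK perm1.
Qed.

Lemma exists_nt : exists2 x, x \in G & x != 1.
Proof. apply/trivgPn; rewrite -cardG_gt1; exact: prime_gt1. Qed.

Lemma iota_nt : iota != 1.
Proof.
have [x Gx nx] := exists_nt; apply/eqP => e.
have : #[x] %| 2.
  rewrite order_dvdn expgS expg1; apply/eqP.
  by rewrite -{1}(perm1 x) -e iotaE // mulVg.
rewrite /order (gen_nt Gx nx) => /(@dvdn_leq _ 2 isT) h.
have := p_ge3; lia.
Qed.

Lemma ord_iota : #[iota] = 2.
Proof.
have ne1 : #[iota] != 1%N by rewrite order_eq1 iota_nt.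
by apply/(prime_nt_dvdP _ ne1) => //; rewrite order_dvdn iota2.
Qed.


Lemma actX c : c \in Aut G -> c \in 'N(X | 'P).
Proof.
move=> Ac; apply/astabsP => x /=; rewrite !inE.
have [pc _] := setIdP Ac.
rewrite (perm_closed _ pc); congr (~~ _ && _).
by rewrite -{1}(aut1 Ac) (inj_eq perm_inj).
Qed.


Lemma CSmem k S : 0 < k -> (S \in cayley_sets G k) =
  [&& S \subset X, iota \in 'N(S | 'P) & #|S| == k].
Proof.
move=> k0; rewrite inE; apply/idP/idP.
  case/and5P => sG n1 inv _ kS; rewrite kS andbT; apply/andP; split.
    apply/subsetP => x Sx; rewrite !inE (subsetP sG) // andbT.
    by apply: contraNneq n1 => e; rewrite -e.
  apply/astabsP => x /=; case Gx: (x \in G).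
    rewrite apermE iotaE //.
    have -> : (x^-1 \in S) = (x \in S^-1) by rewrite inE.
    by rewrite (eqP inv).
  by rewrite apermE (out_Aut Aut_iota) ?Gx.
case/and3P => sX nS kS.
have sG : S \subset G := subset_trans sX (subD1set _ _).
have n1 : 1 \notin S.
  by apply/negP => S1; have := subsetP sX 1 S1; rewrite !inE eqxx.
have inv : S^-1 == S.
  rewrite eqEcard card_invg leqnn andbT; apply/subsetP => x; rewrite inE => Sx'.
  have Gx : x \in G by rewrite -groupV (subsetP sG).
  by rewrite -(astabs_act x nS) /= ?apermE iotaE.
have /set0Pn[x Sx] : S != set0 by rewrite -card_gt0 (eqP kS).
have gen : <<S>> == G.
  rewrite eqEsubset gen_subG sG /=.
  have := subsetP sX x Sx; rewrite !inE => /andP[nx Gx].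
  by rewrite -(gen_nt Gx nx) cycle_subG mem_gen.
by rewrite sG n1 inv gen kS.
Qed.

Lemma Fixmem k b S : 0 < k ->
  (S \in 'Fix_(cayley_sets G k | 'P^*)[b]) =
  [&& S \subset X, (iota \in 'N(S | 'P)) && (b \in 'N(S | 'P)) & #|S| == k].
Proof.
move=> k0.
have E : (S \in afix ('P^*)%act [set b]) = (b \in 'N(S | 'P)).
  by rewrite -astab1_set; apply/afix1P/astab1P.
rewrite inE CSmem // E.
by case: (S \subset X); case: (iota \in 'N(S | 'P)); case: (b \in 'N(S | 'P)); rewrite /= ?andbF ?andbT.
Qed.

Lemma L1 c k : c \in Aut G ->
  #|[set S : {set gT} | [&& S \subset X, c \in 'N(S | 'P) & #|S| == k]]| =
  if #[c] %| k then 'C(#|X| %/ #[c], k %/ #[c]) else 0.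
Proof.
move=> Ac.
set K := <[c]>.
have sKH : K \subset Aut G by rewrite cycle_subG.
have actK : [acts K, on X | 'P] by rewrite cycle_subG actX.
have free : forall x, x \in X -> 'C_K[x | 'P] = 1.
  move=> x Xx; apply/trivgP/subsetP => b /setIP[Kb /astab1P bx].
  by rewrite inE; apply/eqP; exact: aut_fix (subsetP sKH b Kb) Xx bx.
set P := orbit 'P K @: X.
have partP : partition P X := orbit_partition actK.
have cardO : {in P, forall O : {set gT}, #|O| = #[c]}.
  by move=> _ /imsetP[x Xx ->]; rewrite card_orbit free // indexg1.
have trivP : trivIset P by case/and3P: partP.
have n0P : set0 \notin P by case/and3P: partP.
have cX : #|X| = (#|P| * #[c])%N := card_uniform_partition cardO partP.
have stabO : {in P, forall O : {set gT}, c \in 'N(O | 'P)}.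
  move=> _ /imsetP[x Xx ->].
  by apply: (subsetP (acts_orbit _ _ (subsetT K))); rewrite cycle_id.
have coverP (Q : {set {set gT}}) : Q \subset P -> #|cover Q| = (#|Q| * #[c])%N.
  move=> sQ; apply: card_uniform_partition.
    by move=> O QO; apply: cardO; apply: (subsetP sQ).
  rewrite /partition eqxx (trivIsetS sQ trivP) /=.
  by apply: contra n0P; apply: (subsetP sQ).
have sub12 : forall Q1 Q2 : {set {set gT}}, Q1 \subset P -> Q2 \subset P ->
    cover Q1 \subset cover Q2 -> Q1 \subset Q2.
  move=> Q1 Q2 s1 s2 sc; apply/subsetP => O O1.
  have PO := subsetP s1 O O1.
  have /set0Pn[x Ox] : O != set0 by apply: contraNneq n0P => <-.
  have : x \in cover Q2 by apply: (subsetP sc); apply/bigcupP; exists O.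
  case/bigcupP => O' O'2 xO'.
  have e1 := def_pblock trivP PO Ox.
  have e2 := def_pblock trivP (subsetP s2 _ O'2) xO'.
  by rewrite -e1 e2.
set Z := [set Q : {set {set gT}} | (Q \subset P) && (#|Q| * #[c] == k)%N].
have -> : [set S : {set gT} | [&& S \subset X, c \in 'N(S | 'P) & #|S| == k]]
    = cover @: Z.
  apply/setP => S; rewrite inE; apply/and3P/imsetP.
    case=> sX nS kS.
    have sQ : [set O in P | O \subset S] \subset P.
      by apply/subsetP => O; rewrite inE => /andP[].
    have eS : S = cover [set O in P | O \subset S].
      apply/eqP; rewrite eqEsubset; apply/andP; split.
        apply/subsetP => x Sx; apply/bigcupP.
        have Xx := subsetP sX x Sx.
        exists (orbit 'P K x); last exact: orbit_refl.
        rewrite inE imset_f //= acts_sub_orbit //.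
        by rewrite cycle_subG.
      by apply/bigcupsP => O; rewrite inE => /andP[].
    exists [set O in P | O \subset S] => //.
    by rewrite inE sQ -coverP // -eS.
  case=> Q; rewrite inE => /andP[sQ kQ] ->.
  split.
  - apply/bigcupsP => O QO; exact: partitionS partP (subsetP sQ O QO).
  - apply/astabsP => x; apply/bigcupP/bigcupP => [[O QO xO]|[O QO xO]];
      exists O => //.
      by rewrite -(astabs_act x (stabO O (subsetP sQ O QO))).
    by rewrite (astabs_act x (stabO O (subsetP sQ O QO))).
  - by rewrite coverP.
rewrite card_in_imset; last first.
  move=> Q1 Q2; rewrite !inE => /andP[s1 _] /andP[s2 _] e.
  by apply/eqP; rewrite eqEsubset; apply/andP; split; apply: sub12 => //; rewrite e.
have e0 : 0 < #[c] := order_gt0 c.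
have cP : #|P| = (#|X| %/ #[c])%N by rewrite cX mulnK.
case: ifP => dk.
  have -> : Z = [set Q : {set {set gT}} | Q \subset P & #|Q| == k %/ #[c]].
    apply/setP => Q; rewrite !inE; congr (_ && _).
    by rewrite -{1}(divnK dk) eqn_pmul2r.
  by rewrite cards_draws cP.
apply/eqP; rewrite cards_eq0; apply/eqP/setP => Q; rewrite !inE.
apply/negbTE; apply/negP => /andP[_ /eqP ek]; move: dk; by rewrite -ek dvdn_mull.
Qed.

Variable g : {perm gT}.
Hypothesis defH : Aut G = <[g]>.

Lemma ord_g : #[g] = (2 * mm)%N.
Proof. by rewrite -p_eq -oH defH. Qed.

Lemma iota_gm : iota = g ^+ mm.
Proof.
have o2 : #[g ^+ mm] = 2.
  by rewrite orderXdiv ord_g ?dvdn_mull // mulnK // mm_gt0.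
have Hi : <[iota]> \subset Aut G by rewrite cycle_subG Aut_iota.
have Hg : <[g ^+ mm]> \subset Aut G by rewrite defH cycle_subG groupX ?cycle_id.
have := eq_subG_cyclic (Aut_prime_cyclic prG) Hi Hg.
rewrite -!orderE ord_iota o2 eqxx => /eqP e.
have : iota \in <[g ^+ mm]> by rewrite -e cycle_id.
case/cycleP => j; rewrite -expg_mod_order o2.
have : j %% 2 < 2 by rewrite ltn_mod.
case: (j %% 2) => [|[|//]] _ /=; last by rewrite expg1.
by rewrite expg0 => e0; move: iota_nt; rewrite e0 eqxx.
Qed.

Definition Fd d k := if ((2 * mm) %/ d %| k)%N then 'C(d, k %/ ((2 * mm) %/ d)) else 0%N.

Lemma cardX : #|X| = (2 * mm)%N.
Proof. by rewrite -p_eq (cardsD1 1 G) group1. Qed.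

Lemma fix_count k i : 0 < k ->
  #|'Fix_(cayley_sets G k | 'P^*)[g ^+ i]| = Fd (gcdn i mm) k.
Proof.
move=> k0; set d := gcdn i mm.
have -> : 'Fix_(cayley_sets G k | 'P^*)[g ^+ i] =
    [set S : {set gT} | [&& S \subset X, g ^+ d \in 'N(S | 'P) & #|S| == k]].
  apply/setP => S; rewrite Fixmem // iota_gm.
  by rewrite (gcd_in ('N(S | 'P))%G g i mm_gt0) [in RHS]inE.
rewrite L1; last by rewrite defH groupX ?cycle_id.
have d0 : 0 < d by rewrite gcdn_gt0 mm_gt0 orbT.
have dd : (d %| 2 * mm)%N by rewrite dvdn_mull // dvdn_gcdr.
rewrite orderXdiv ord_g // cardX /Fd.
have -> : ((2 * mm) %/ ((2 * mm) %/ d))%N = d.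
  by rewrite -{1}(divnK dd) mulKn // divn_gt0 // dvdn_leq // muln_gt0 mm_gt0.
by [].
Qed.

Lemma acts1 k b S : 0 < k -> b \in Aut G -> S \in cayley_sets G k ->
  'P^* S b \in cayley_sets G k.
Proof.
move=> k0 Ab; rewrite !CSmem // => /and3P[sX nS kS].
apply/and3P; split.
- apply/subsetP => _ /imsetP[x Sx ->].
  by rewrite (astabs_act x (actX Ab)) (subsetP sX).
- rewrite -astab1_set astab1_act astab1_set mem_conjg.
  have cH : abelian (Aut G) := Aut_cyclic_abelian (prime_cyclic prG).
  have cib : commute iota b^-1.
    by apply: (centsP cH); rewrite ?groupV ?Aut_iota.
  by rewrite conjgE cib invgK mulKVg.
- by rewrite setactE card_imset //; exact: act_inj.
Qed.

Lemma a_w_count k : 0 < k ->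
  (a_w G k * (2 * mm))%N = \sum_(i < 2 * mm) Fd (gcdn i mm) k.
Proof.
move=> k0.
have acts : [acts Aut G, on cayley_sets G k | 'P^*].
  apply/subsetP => b Ab; apply/astabsP => S; apply/idP/idP; last exact: acts1 k0 Ab.
  move=> h; rewrite -(actK ('P^*)%act b S).
  by apply: (acts1 k0 _ h); rewrite groupV.
have FC := Frobenius_Cauchy acts.
have -> : a_w G k = #|orbit 'P^* (Aut G) @: cayley_sets G k|.
  rewrite /a_w; congr #|_|; apply: eq_imset => S; by [].
rewrite [in LHS](_ : (2 * mm)%N = #|Aut G|); last by rewrite oH p_eq.
rewrite -FC (eq_bigl (fun a => a \in <[g]>)); last by move=> a; rewrite /= defH.
rewrite (sum_cycle _ ord_g).
by apply: eq_bigr => i _; rewrite fix_count.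
Qed.

End Grp.

Lemma sum2 (f : nat -> nat) m : 0 < m ->
  \sum_(i < 2 * m) f (gcdn i m) =
  (2 * \sum_(d <- divisors m) totient (m %/ d) * f d)%N.
Proof.
move=> m0; rewrite -(big_mkord xpredT (fun i => f (gcdn i m))) mul2n -addnn.
rewrite (@big_cat_nat _ _ _ m) ?leq_addr //=.
have -> : \sum_(m <= i < m + m) f (gcdn i m) = \sum_(0 <= i < m) f (gcdn i m).
  rewrite -{1}(add0n m) big_addn addnK; apply: eq_bigr => i _.
  by rewrite gcdnC gcdnDr gcdnC.
by rewrite sum_gcd // addnn mul2n.
Qed.

Close Scope group_scope.
Import GRing.Theory Num.Theory.
Local Open Scope ring_scope.

Lemma coef_sumX a b (F : nat -> rat) n :
  (\sum_(a <= k < b) F k *: 'X^k)`_n = if (a <= n < b)%N then F n else 0.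
Proof.
rewrite coef_sum (eq_bigr (fun k => if k == n then F k else 0)); last first.
  move=> k _.
  rewrite coefZ coefXn eq_sym.
  by case: (k == n); rewrite ?mulr1 ?mulr0.
by rewrite -(@big_nat1_eq rat 0 +%R F n a b) big_mkcond.
Qed.

Lemma binom_poly e d : (0 < e)%N ->
  (1 + 'X^e) ^+ d - 1 = \sum_(1 <= k < (e * d).+1)
     (if (e %| k)%N then ('C(d, k %/ e))%:R else 0) *: 'X^k :> {poly rat}.
Proof.
move=> e0; apply/polyP => n; rewrite coef_sumX coefB coef1 (addrC 1 'X^e) exprD1n coef_sum.
under eq_bigr do rewrite coefMn -exprM coefXn.
case: (boolP (e %| n)%N) => [/dvdnP [q ->] | ndv]; last first.
  rewrite big1 ?if_same; last first.
    move=> i _; case: eqP => [ei|]; last by rewrite mul0rn.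
    by move: ndv; rewrite ei dvdn_mulr.
  case: eqP => [n0|]; last by rewrite subr0.
  by move: ndv; rewrite n0 dvdn0.
rewrite (eq_bigr (fun i : 'I_d.+1 => if (i == q :> nat) then ('C(d, i))%:R else 0));
  last first.
  move=> i _; rewrite mulnC eqn_pmul2l // eq_sym.
  by case: (i == q :> nat); rewrite ?mulr1n ?mul0rn.
rewrite -big_mkcond (@big_ord1_eq rat 0 +%R (fun i => ('C(d, i))%:R) q d.+1) mulnK //.
case: q => [|q]; first by rewrite bin0 subrr.
have -> : ((q.+1 * e)%N == 0) = false by apply/negbTE; rewrite -lt0n muln_gt0 e0.
have -> : (0 < q.+1 * e)%N by rewrite muln_gt0 e0.
by rewrite subr0 /= ltnS (mulnC q.+1) ltnS leq_pmul2l.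
Qed.


Lemma main_gen (gT : finGroupType) (G : {group gT}) : prime #|G| -> odd #|G| ->
  Psi_w G = (2%:R / (#|G|.-1)%:R) *:
      \sum_(d <- divisors (#|G|.-1 %/ 2))
        (totient (#|G|.-1 %/ (2 * d)))%:R *: ((1 + 'X^(#|G|.-1 %/ d)) ^+ d - 1).
Proof.
move=> prG oddG.
have [g defH] := cyclicP (Aut_prime_cyclic prG).
have pe : #|G|.-1 = (2 * mm G)%N := p_eq prG oddG.
have m0 : (0 < mm G)%N := mm_gt0 prG oddG.
have pS : #|G| = (2 * mm G).+1 by rewrite -pe prednK // prime_gt0.
have key : forall k, (0 < k)%N -> (a_w G k * mm G)%N =
    (\sum_(d <- divisors (mm G)) totient (mm G %/ d) * Fd G d k)%N.
  move=> k k0; have := a_w_count prG oddG defH k0; rewrite (sum2 (fun x => Fd G x k)) // => /eqP.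
  by rewrite mulnCA eqn_pmul2l // => /eqP.
rewrite /mm in key m0 pe pS.
set m := (#|G|.-1 %/ 2)%N in key m0 pe pS *.
rewrite pe.
apply/polyP => n.
rewrite /Psi_w coef_sumX coefZ coef_sum.
rewrite (eq_big_seq (fun d => (totient (m %/ d))%:R *
    (if (1 <= n < #|G|)%N then (Fd G d n)%:R else 0))); last first.
  move=> d dd; rewrite coefZ.
  have dm : (d %| m)%N by rewrite dvdn_divisors.
  have d0 : (0 < d)%N by apply: dvdn_gt0 m0 dm.
  have d2m : (d %| 2 * m)%N by rewrite dvdn_mull.
  have e0 : (0 < (2 * m) %/ d)%N.
    by rewrite divn_gt0 // dvdn_leq // muln_gt0 m0.
  rewrite divnMl // (binom_poly _ e0) divnK // -pS coef_sumX /Fd /mm -/m.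
  by case: ifP => _ //; case: ifP.
case: ifP => nr; last first.
  by rewrite big1 ?mulr0 // => d _; rewrite mulr0.
have n0 : (0 < n)%N by case/andP: nr.
rewrite (eq_bigr (fun d => ((totient (m %/ d) * Fd G d n)%N)%:R)); last first.
  by move=> d _; rewrite natrM.
rewrite -natr_sum -key //.
have mr : (m%:R : rat) != 0 by rewrite pnatr_eq0 -lt0n.
rewrite !natrM; field.
exact: mr.
Qed.

Theorem corollary5p1 (p : nat) (pr_p : prime p) (odd_p : odd p) :
  Psi_w [set: 'Z_p]%G =
    (2%:R / (p.-1)%:R) *:
      \sum_(d <- divisors (p.-1 %/ 2))
        (totient (p.-1 %/ (2 * d)))%:R *: ((1 + 'X^(p.-1 %/ d)) ^+ d - 1)
  /\
  (E_w [set: 'Z_p]%G)%:R = (Psi_w [set: 'Z_p]%G).[1] /\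
  ((E_w [set: 'Z_p]%G)%:R : rat) =
    (2%:R / (p.-1)%:R) *
      \sum_(d <- divisors (p.-1 %/ 2))
        (totient (p.-1 %/ (2 * d)))%:R * (2 ^+ d - 1).
Proof.
have cardZ : #|[set: 'Z_p]%G| = p.
  by rewrite /= cardsT card_ord Zp_cast // prime_gt1.
have prG : prime #|[set: 'Z_p]%G| by rewrite cardZ.
have oddG : odd #|[set: 'Z_p]%G| by rewrite cardZ.
have M := main_gen prG oddG; rewrite cardZ in M.
have E1 : (E_w [set: 'Z_p]%G)%:R = (Psi_w [set: 'Z_p]%G).[1] :> rat.
  rewrite /E_w /Psi_w horner_sum natr_sum; apply: eq_bigr => k _.
  by rewrite hornerZ hornerXn expr1n mulr1.
split; first exact: M.
split; first exact: E1.
rewrite E1 M hornerZ horner_sum; congr (_ * _); apply: eq_bigr => d _.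
by rewrite hornerZ !hornerE expr1n.
Qed.
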